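(* Let $\mu$ be a strict partition with $\mu_1\ge2$. Then $D(\mu)$ consists precisely of those partitions $\alpha$ with exactly $\mu_1-1$ distinct positive part sizes whose rectangular decomposition $x_1y_1+\cdots+x_{\mu_1-1}y_{\mu_1-1}$ satisfies $x_i=1$ for every $i\in\{1,\ldots,\mu_1-1\}$ such that $\mu$ has no part of size $i$.
   Context: A partition is a weakly decreasing sequence of nonnegative integers with finitely many nonzero parts, identified with its Ferrers board. $\alpha$ contains $\mu$ if one can delete some rows and some columns of the Ferrers board of $\alpha$ so that after top/left-justifying one obtains $\mu$; otherwise $\alpha$ avoids $\mu$. Strict: positive parts distinct. If $\alpha$ has exactly $k$ distinct positive part sizes, its Ferrers board is uniquely the horizontal concatenation of $k$ rectangles with widths $x_1,\ldots,x_k>0$ and strictly decreasing heights $y_1>\cdots>y_k>0$ (i.e. $\alpha$ has exactly $x_i$ columns of length $y_i$), so $|\alpha|=\sum x_iy_i$; this is the rectangular decomposition of $\alpha$. For strict $\mu$, $D_n(\mu)$ is the set of partitions of weight $n>0$ avoiding $\mu$ with exactly $\mu_1-1$ distinct positive part sizes, $D_0(\mu)=\emptyset$, and $D(\mu)=\bigcup_n D_n(\mu)$. *)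

(* Defs.v *)
From mathcomp Require Import all_boot.
Set Implicit Arguments. Unset Strict Implicit. Unset Printing Implicit Defensive.

Definition is_partition (a : seq nat) : bool :=
  sorted geq a && all (fun x => 0 < x) a.

Definition is_strict (m : seq nat) : bool :=
  sorted (fun x y => y < x) m && all (fun x => 0 < x) m.

Definition weight (a : seq nat) : nat := sumn a.

(* Containment: delete the rows not selected by the row mask [r] and the
   columns not selected by the column mask [c]; after top/left-justifying,
   a kept row of length x has  count id (take x c)  cells; empty rows
   disappear. *)
Definition contains (a mu : seq nat) : Prop :=
  exists (r c : bitseq),
    [seq n <- [seq count id (take x c) | x <- mask r a] | 0 < n] = mu.

Definition avoids (a mu : seq nat) : Prop := ~ contains a mu.

Definition ndistinct (a : seq nat) : nat := size (undup [seq x <- a | 0 < x]).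

Definition conj_part (a : seq nat) : seq nat :=
  mkseq (fun j => count (fun x => j < x) a) (head 0 a).

(* rectangular decomposition: heights y_1 > ... > y_k are the distinct column
   lengths, and x_i is the number of columns of length y_i (1-indexed i). *)
Definition rect_y (a : seq nat) (i : nat) : nat := nth 0 (undup (conj_part a)) i.-1.
Definition rect_x (a : seq nat) (i : nat) : nat := count_mem (rect_y a i) (conj_part a).

Definition mu1 (mu : seq nat) : nat := head 0 mu.

Definition in_D (mu a : seq nat) : Prop :=
  [/\ is_partition a, 0 < weight a, avoids a mu & ndistinct a = (mu1 mu).-1].

(* Main.v *)
Require Import Defs.
From mathcomp Require Import all_boot zify.
Set Implicit Arguments. Unset Strict Implicit. Unset Printing Implicit Defensive.

Lemma geq_trans : transitive geq.
Proof. by move=> u v w h1 h2; apply: leq_trans h2 h1. Qed.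

Lemma part_cons x a : is_partition (x :: a) ->
  [/\ is_partition a, 0 < x, head 0 a <= x & all (fun y => y <= x) a].
Proof.
rewrite /is_partition /= => /andP[Hs /andP[Hx Ha]].
have Hp := order_path_min geq_trans Hs.
split => //.
- by rewrite Ha (path_sorted Hs).
- by case: a Hs {Hp Ha} => //= y a /andP[].
Qed.

Lemma part_le_head a : is_partition a -> all (fun y => y <= head 0 a) a.
Proof.
case: a => //= x a H; case/part_cons: H => _ _ _ H.
by rewrite leqnn H.
Qed.

Lemma map_iota_const (f : nat -> nat) c m d :
  (forall j, m <= j < m + d -> f j = c) -> map f (iota m d) = nseq d c.
Proof.
elim: d m => //= d IH m H; rewrite H ?leqnn ?addnS ?ltnS ?leq_addr //.
by rewrite IH // => j /andP[H1 H2]; apply: H; rewrite (ltnW H1) addnS H2.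
Qed.

Lemma conj_cons x a : is_partition (x :: a) ->
  conj_part (x :: a) = map succn (conj_part a) ++ nseq (x - head 0 a) 1.
Proof.
move=> H; have [Ha Hx Hh Hall] := part_cons H.
have Hle := part_le_head Ha.
rewrite /conj_part /mkseq /=.
have -> : iota 0 x = iota 0 (head 0 a + (x - head 0 a)) by rewrite subnKC.
rewrite iotaD map_cat; congr (_ ++ _).
  rewrite -map_comp. apply/eq_in_map => j; rewrite mem_iota /= => Hj.
  by rewrite (leq_trans Hj Hh).
set d := x - _.
apply: map_iota_const => j; rewrite add0n => /andP[H1 H2].
rewrite (subnKC Hh) in H2; rewrite H2 /= add1n; congr succn.
apply/eqP; rewrite -leqn0 leqNgt -has_count; apply/hasPn => y Hy.
by rewrite -leqNgt (leq_trans (allP Hle y Hy) H1).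
Qed.

Definition Sof (a : seq nat) := 0 :: rev (undup a).

Lemma head_undup a : is_partition a -> head 0 (undup a) = head 0 a.
Proof.
elim: a => //= x a IH H; have [Ha Hx Hh Hall] := part_cons H.
case: ifP => // Hin; rewrite IH //.
have := allP (part_le_head Ha) x Hin => Hxh.
by apply/eqP; rewrite eqn_leq Hh Hxh.
Qed.

Lemma Sof_last a : is_partition a -> nth 0 (Sof a) (size (undup a)) = head 0 a.
Proof.
move=> H; rewrite -head_undup //; rewrite /Sof.
case E: (undup a) => [|y U] //=.
rewrite nth_rev /= ?subnn ?ltnSn //.
Qed.

Lemma count_succ y s : count_mem y.+1 (map succn s) = count_mem y s.
Proof. by rewrite count_map; apply: eq_count => z /=; rewrite eqSS. Qed.

Lemma rect_main a : is_partition a ->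
  [/\ all (fun y => 0 < y) (conj_part a),
      size (undup (conj_part a)) = size (undup a) &
   forall i, 0 < i <= size (undup a) ->
     count_mem (nth 0 (undup (conj_part a)) i.-1) (conj_part a)
       = nth 0 (Sof a) i - nth 0 (Sof a) i.-1].
Proof.
elim: a => [|x a IH] H; first by split => // -[|i].
have [Ha Hx Hh Hall] := part_cons H.
have [IH1 IH2 IH3] := IH Ha.
rewrite conj_cons //.
have [Heq|Hlt] : head 0 a = x \/ head 0 a < x.
  by case: (ltngtP (head 0 a) x) Hh => //; [right|left].
- have Hin : x \in a.
    by case: a Heq Hx {IH IH1 IH2 IH3 Ha Hh Hall H} => [/= <-|y a /= ->] //; rewrite mem_head.
  have Eu : undup (x :: a) = undup a by rewrite /= Hin.
  rewrite Heq subnn cats0 undup_map_inj; last exact: succn_inj.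
  rewrite /Sof Eu; split.
  + by apply/allP => z /mapP[w _ ->].
  + by rewrite size_map.
  move=> i Hi; rewrite (nth_map 0); last by rewrite IH2 (leq_trans _ (andP Hi).2) // prednK ?(andP Hi).1.
  by rewrite count_succ IH3.
- have Hnin : x \notin a.
    apply/negP => Hin; have := allP (part_le_head Ha) x Hin.
    by rewrite leqNgt Hlt.
  have Eu : undup (x :: a) = x :: undup a by rewrite /= (negbTE Hnin).
  have Hd : 0 < x - head 0 a by rewrite subn_gt0.
  have Ec : undup (map succn (conj_part a) ++ nseq (x - head 0 a) 1)
           = rcons (map succn (undup (conj_part a))) 1.
    rewrite undup_cat undup_map_inj; last exact: succn_inj.
    rewrite -cats1; congr (_ ++ _).
      apply/all_filterP/allP => z /mapP[w Hw ->].
      have Hw' : 0 < w by apply: (allP IH1); rewrite -mem_undup.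
      by case: w Hw Hw' => //= w _ _; rewrite mem_nseq andbF.
    case: (x - head 0 a) Hd => // d _ /=.
    by elim: d => //= d ->; rewrite mem_nseq eqxx andbT.
  rewrite Ec /Sof Eu rev_cons -rcons_cons; split.
  + rewrite all_cat; apply/andP; split; first by apply/allP => z /mapP[w _ ->].
    by apply/allP => z; rewrite mem_nseq => /andP[_ /eqP ->].
  + by rewrite size_rcons size_map IH2.
  move=> i /andP[Hi0]; rewrite /= leq_eqVlt ltnS => /orP[/eqP Ei|Hi'].
  + subst i; rewrite count_cat count_nseq nth_rcons size_map IH2 ltnn eqxx.
    rewrite (count_succ 0).
    have -> : count_mem 0 (conj_part a) = 0.
      by apply/count_memPn; apply/negP => /(allP IH1).
    rewrite /= mul1n add0n -rcons_cons !nth_rcons /= size_rev ltnn eqxx ltnS leqnn.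
    by have := Sof_last Ha; rewrite /Sof /= => ->.
  + rewrite count_cat count_nseq.
    rewrite nth_rcons size_map IH2 (leq_trans _ Hi') ?prednK // (nth_map 0); last by rewrite IH2 (leq_trans _ Hi') ?prednK.
    rewrite count_succ /= eqSS.
    have Hpos : 0 < nth 0 (undup (conj_part a)) i.-1.
      by apply: (allP IH1); rewrite -mem_undup mem_nth // IH2 prednK.
    rewrite (eq_sym 0) eqn0Ngt Hpos /= mul0n addn0 IH3 ?Hi0 ?Hi' //.
    rewrite -rcons_cons !nth_rcons /= size_rev !ltnS Hi' (leq_trans (leq_pred _) Hi').
    by rewrite /Sof.
Qed.

Lemma rect_x_eq a i : is_partition a -> 0 < i <= size (undup a) ->
  rect_x a i = nth 0 (Sof a) i - nth 0 (Sof a) i.-1.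
Proof. by move=> H Hi; rewrite /rect_x /rect_y; case: (rect_main H) => _ _ ->. Qed.

Lemma part_pos a : is_partition a -> forall z, z \in a -> 0 < z.
Proof. by case/andP => _ /allP. Qed.

Lemma S_sorted a : is_partition a -> sorted ltn (Sof a).
Proof.
move=> H; rewrite /Sof /= path_sortedE; last exact: ltn_trans.
apply/andP; split.
  by apply/allP => z; rewrite mem_rev mem_undup; apply: part_pos.
rewrite rev_sorted gtn_sorted_uniq_geq undup_uniq /=.
apply: (subseq_sorted geq_trans (undup_subseq a)).
by case/andP: H.
Qed.

Lemma S_size a : size (Sof a) = (size (undup a)).+1.
Proof. by rewrite /= size_rev. Qed.

Lemma S_mem a z : z \in a -> exists2 j, 0 < j <= size (undup a) & nth 0 (Sof a) j = z.
Proof.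
move=> Hz; have Hz' : z \in rev (undup a) by rewrite mem_rev mem_undup.
exists (index z (rev (undup a))).+1 => /=; last by rewrite nth_index.
by rewrite -(size_rev (undup a)) index_mem.
Qed.

Lemma S_mem0 a z : z \in Sof a -> exists2 j, j <= size (undup a) & nth 0 (Sof a) j = z.
Proof.
move=> Hz; exists (index z (Sof a)); last by rewrite nth_index.
by rewrite -ltnS -S_size index_mem.
Qed.

Lemma S_in a j : 0 < j <= size (undup a) -> nth 0 (Sof a) j \in a.
Proof.
case: j => // j; rewrite ltnS /= => Hj.
by rewrite -mem_undup -mem_rev mem_nth // size_rev.
Qed.

Lemma S_lt a j1 j2 : is_partition a -> j1 < j2 -> j2 <= size (undup a) ->
  nth 0 (Sof a) j1 < nth 0 (Sof a) j2.
Proof.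
move=> H H12 H2; apply: (sorted_ltn_nth ltn_trans 0 (S_sorted H)) => //;
  rewrite inE S_size ltnS //; exact: leq_trans (ltnW H12) H2.
Qed.

Lemma S_le a j1 j2 : is_partition a -> j1 <= j2 -> j2 <= size (undup a) ->
  nth 0 (Sof a) j1 <= nth 0 (Sof a) j2.
Proof.
move=> H; rewrite leq_eqVlt => /orP[/eqP -> //|H12] H2.
by apply: ltnW; apply: S_lt.
Qed.

Lemma S_ltinv a j1 j2 : is_partition a -> j1 <= size (undup a) -> j2 <= size (undup a) ->
  nth 0 (Sof a) j1 < nth 0 (Sof a) j2 -> j1 < j2.
Proof.
move=> H H1 H2 Hlt; rewrite ltnNge; apply/negP => H21.
by have := S_le H H21 H1; rewrite leqNgt Hlt.
Qed.

Lemma S_0 a : nth 0 (Sof a) 0 = 0.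
Proof. by []. Qed.

Lemma cnt_sorted (S : seq nat) j : sorted ltn S -> j < size S ->
  count (fun v => v <= nth 0 S j) S = j.+1.
Proof.
elim: S j => // s S IH j Hs; have Hall := order_path_min ltn_trans Hs.
have HS := path_sorted Hs.
case: j => [|j] /= Hj.
  rewrite leqnn add1n; congr succn; apply/eqP; rewrite -leqn0 leqNgt -has_count.
  by apply/hasPn => v Hv; rewrite -ltnNge (allP Hall v Hv).
have : s < nth 0 S j by apply: (allP Hall); rewrite mem_nth.
by move/ltnW => ->; rewrite IH.
Qed.

Lemma cnt_iota (T : seq nat) n : all (fun v => 0 < v) T -> uniq T ->
  count (fun p => p.+1 \in T) (iota 0 n) = count (fun v => v <= n) T.
Proof.
move=> Hp Hu; elim: n => [|n IH].
  by apply/esym/eqP; rewrite -leqn0 leqNgt -has_count; apply/hasPn => v Hv; rewrite -ltnNge (allP Hp v Hv).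
rewrite -addn1 iotaD count_cat IH /= add0n addn0.
rewrite addn1 -(count_uniq_mem n.+1 Hu) -addn1 -count_predUI.
have -> : count (predI (fun v => v <= n) (pred1 (n + 1))) T = 0.
  apply/eqP; rewrite -leqn0 leqNgt -has_count; apply/hasPn => v _ /=.
  by apply/negP => /andP[H1 /eqP E]; move: H1; rewrite E addn1 ltnn.
by rewrite addn0; apply: eq_count => v /=; rewrite addn1 (leq_eqVlt v n.+1) ltnS orbC.
Qed.

Lemma g_mono (c : bitseq) x y : x <= y -> count id (take x c) <= count id (take y c).
Proof. by move=> Hxy; rewrite -(subnKC Hxy) takeD count_cat leq_addr. Qed.

Lemma g_lip (c : bitseq) x y : x <= y -> count id (take y c) <= count id (take x c) + (y - x).
Proof.
move=> Hxy; rewrite -{1}(subnKC Hxy) takeD count_cat leq_add2l.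
by apply: leq_trans (count_size _ _) _; rewrite size_take_min geq_minl.
Qed.

Lemma find_switch (P : pred nat) k : P 0 -> ~~ P k ->
  exists i, [/\ 0 < i <= k, P i.-1 & ~~ P i].
Proof.
move=> P0; elim: k => [|k IH] Hk; first by rewrite P0 in Hk.
case E: (P k); first by exists k.+1; rewrite E Hk ltnS leqnn.
by have [i [/andP[Hi1 Hi2] H1 H2]] := IH (negbT E); exists i; rewrite Hi1 H1 H2 (leq_trans Hi2).
Qed.

Lemma nd_eq a : is_partition a -> ndistinct a = size (undup a).
Proof. by case/andP => _ Ha; rewrite /ndistinct (all_filterP Ha). Qed.

Lemma dir2 mu a : is_strict mu -> 2 <= mu1 mu -> is_partition a ->
  ndistinct a = (mu1 mu).-1 ->
  (forall i, 1 <= i <= (mu1 mu).-1 -> i \notin mu -> rect_x a i = 1) -> avoids a mu.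
Proof.
move=> Hs H2 Hp Hnd Hc [r [c Heq]].
rewrite nd_eq // in Hnd.
set k := size (undup a) in Hnd.
set S := Sof a.
pose g x := count id (take x c).
have Hv : forall v, v \in mu -> exists2 j, 0 < j <= k & g (nth 0 S j) = v.
  move=> v; rewrite -Heq mem_filter => /andP[_ /mapP[z Hz ->]].
  by have [j Hj <-] := S_mem (mem_mask Hz); exists j.
have Hmu1 : mu1 mu \in mu by case: (mu) H2 => //= m s _; rewrite mem_head.
have Ek : mu1 mu = k.+1 by rewrite Hnd prednK // (leq_trans _ H2).
have [j0 Hj0 Hg0] := Hv _ Hmu1.
have HgK : k < g (nth 0 S k).
  rewrite -ltnS -Ek -Hg0 ltnS; apply: g_mono; apply: S_le => //; first by case/andP: Hj0.
have HP0 : g (nth 0 S 0) <= 0 by rewrite /g /= take0.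
have HPk : ~~ (g (nth 0 S k) <= k) by rewrite -ltnNge.
have [i [/andP[Hi0 Hik] HP HnP]] := @find_switch (fun j => g (nth 0 S j) <= j) k HP0 HPk.
rewrite -ltnNge in HnP.
have Hlip : g (nth 0 S i) <= g (nth 0 S i.-1) + (nth 0 S i - nth 0 S i.-1).
  by apply: g_lip; apply: S_le => //; apply: leq_pred.
have Hne : rect_x a i != 1.
  rewrite rect_x_eq ?Hi0 ?Hik //; apply/eqP => E1; rewrite E1 in Hlip.
  move: HP HnP Hlip; rewrite /S; lia.
have Hin : i \in mu.
  apply/negPn/negP => Hni; move/eqP: Hne; apply; apply: Hc => //.
  by rewrite Hi0 -Hnd.
have [j /andP[Hj0' Hjk] Hgj] := Hv _ Hin.
case: (leqP j i.-1) => Hji.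
  have := g_mono c (S_le Hp Hji (leq_trans (leq_pred _) Hik)).
  rewrite -/(g _) -/(g _) Hgj => Hle.
  rewrite -/S in Hle; move: HP Hle Hi0; lia.
have Hij : i <= j by move: Hji Hi0; lia.
have := g_mono c (S_le Hp Hij Hjk).
rewrite -/(g _) -/(g _) Hgj => Hle.
rewrite -/S in Hle; move: HnP Hle; lia.
Qed.

Definition grt := fun x y : nat => y < x.

Lemma grt_trans : transitive grt.
Proof. by move=> x y z h1 h2; exact: ltn_trans h2 h1. Qed.

Lemma undup_grt a : is_partition a -> sorted grt (undup a).
Proof.
move=> H; have : sorted gtn (undup a).
  rewrite gtn_sorted_uniq_geq undup_uniq /=.
  apply: (subseq_sorted geq_trans (undup_subseq a)); by case/andP: H.
by [].
Qed.

Lemma strict_part mu : is_strict mu -> is_partition mu.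
Proof.
case/andP => Hs Hp; rewrite /is_partition Hp andbT.
by apply: sub_sorted Hs => x y /ltnW.
Qed.

Lemma HG_lemma a i (c : bitseq) : is_partition a ->
  0 < i <= size (undup a) ->
  2 <= nth 0 (Sof a) i - nth 0 (Sof a) i.-1 ->
  c = mkseq (fun p => (p.+1 \in Sof a) || (p.+2 == nth 0 (Sof a) i)) (nth 0 (Sof a) (size (undup a))) ->
  forall j, j <= size (undup a) ->
    count id (take (nth 0 (Sof a) j) c) = j + (i <= j).
Proof.
move=> Hp /andP[Hi0 Hik] Hx -> j Hjk.
set S := Sof a; set k := size (undup a).
have HSi2 : 2 <= nth 0 S i by move: Hx; rewrite /S; lia.
rewrite /mkseq -map_take take_iota (minn_idPl (S_le Hp Hjk (leqnn _))) count_map.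
set A := fun p => p.+1 \in S.
set B := fun p => p.+2 == nth 0 S i.
have -> : count (preim (fun p => A p || B p) id) (iota 0 (nth 0 S j))
        = count (predU A B) (iota 0 (nth 0 S j)) by [].
have HI : count (predI A B) (iota 0 (nth 0 S j)) = 0.
  apply/eqP; rewrite -leqn0 leqNgt -has_count; apply/hasPn => p _ /=.
  apply/negP => /andP[HA /eqP HB].
  have [j' Hj' Ej'] := S_mem0 HA.
  have Hlt : nth 0 S j' < nth 0 S i by rewrite -/S Ej' -HB.
  have Hj'i := S_ltinv Hp Hj' Hik Hlt.
  have Hj'i1 : j' <= i.-1 by move: Hj'i; lia.
  have := S_le Hp Hj'i1 (leq_trans (leq_pred _) Hik).
  rewrite -/S Ej'; move: Hx HB; rewrite -/S; lia.
have := count_predUI A B (iota 0 (nth 0 S j)); rewrite HI addn0 => ->.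
congr addn.
- rewrite /A /S /Sof.
  have -> : count (fun p => p.+1 \in 0 :: rev (undup a)) (iota 0 (nth 0 (Sof a) j))
          = count (fun p => p.+1 \in rev (undup a)) (iota 0 (nth 0 (Sof a) j)).
    by apply: eq_count => p; rewrite in_cons.
  rewrite cnt_iota ?rev_uniq ?undup_uniq //; last first.
    by apply/allP => z; rewrite mem_rev mem_undup; apply: part_pos.
  have := cnt_sorted (S_sorted Hp) (j := j); rewrite S_size ltnS => /(_ Hjk).
  by rewrite /Sof /= => [[]].
- rewrite /B.
  have -> : count (fun p => p.+2 == nth 0 S i) (iota 0 (nth 0 S j))
          = count_mem (nth 0 S i - 2) (iota 0 (nth 0 S j)).
    by apply: eq_count => p /=; apply/eqP/eqP; lia.
  rewrite count_uniq_mem ?iota_uniq // mem_iota /= add0n.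
  case: (leqP i j) => Hij.
    have := S_le Hp Hij Hjk; rewrite -/S; lia.
  have Hji1 : j <= i.-1 by move: Hij; lia.
  have := S_le Hp Hji1 (leq_trans (leq_pred _) Hik).
  by rewrite -/S; move: Hx; rewrite -/S; lia.
Qed.

Lemma dir1 mu a i : is_strict mu -> 2 <= mu1 mu -> is_partition a ->
  size (undup a) = (mu1 mu).-1 ->
  1 <= i <= (mu1 mu).-1 -> i \notin mu -> rect_x a i != 1 -> contains a mu.
Proof.
move=> Hs H2 Hp Hk Hi Hni Hne.
set k := size (undup a) in Hk.
have Hik : 0 < i <= k by rewrite Hk.
have Ek : mu1 mu = k.+1 by rewrite Hk prednK // (leq_trans _ H2).
set S := Sof a.
have Hx : 2 <= nth 0 S i - nth 0 S i.-1.
  move: Hne; rewrite rect_x_eq // -/S.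
  have := S_lt Hp (j1 := i.-1) (j2 := i); rewrite -/S.
  case/andP: Hik => Hi0 Hik'; rewrite prednK // => /(_ (ltnSn _) Hik').
  lia.
pose c := mkseq (fun p => (p.+1 \in S) || (p.+2 == nth 0 S i)) (nth 0 S k).
pose g x := count id (take x c).
have HG : forall j, j <= k -> g (nth 0 S j) = j + (i <= j).
  by move=> j Hj; apply: (HG_lemma Hp Hik Hx).
have Hmup := strict_part Hs.
have Hmupos : forall v, v \in mu -> 0 < v by apply: part_pos.
have Hmule : forall v, v \in mu -> v <= k.+1.
  by move=> v Hv; rewrite -Ek; apply: (allP (part_le_head Hmup)).
pose rows := [seq z <- undup a | g z \in mu].
have Hsub : subseq rows a.
  exact: subseq_trans (filter_subseq _ _) (undup_subseq a).
case/subseqP: Hsub => m _ Hm.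
exists m, c; rewrite -Hm.
have Hall : all (fun n => 0 < n) [seq count id (take x c) | x <- rows].
  apply/allP => v /mapP[z]; rewrite mem_filter => /andP[Hz _] ->.
  exact: Hmupos.
rewrite (all_filterP Hall).
apply: (irr_sorted_eq grt_trans) => //.
- by move=> x; rewrite /grt ltnn.
- apply: (@homo_sorted_in nat nat (mem a) g grt grt).
  + move=> z1 z2 Hz1 Hz2 /= Hlt.
    have [j1 /andP[_ Hj1] E1] := S_mem Hz1.
    have [j2 /andP[_ Hj2] E2] := S_mem Hz2.
    rewrite -E1 -E2 in Hlt *.
    have H21 := S_ltinv Hp Hj2 Hj1 Hlt.
    rewrite -/S in H21 *. rewrite /grt.
    have := HG j1 Hj1; have := HG j2 Hj2; rewrite /g; move=> -> ->.
    move: H21; case: (leqP i j1) => h1; case: (leqP i j2) => h2 /=; lia.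
  + by apply/allP => z; rewrite mem_filter mem_undup => /andP[_ ?].
  + apply: (subseq_sorted grt_trans (filter_subseq _ _)); exact: undup_grt.
- by case/andP: Hs.
have Hmem : forall v : nat, v \in mu -> v \in [seq count id (take x c) | x <- rows].
  move=> v Hv.
  have Hv0 := Hmupos v Hv; have Hvk := Hmule v Hv.
  have Hvi : v != i by apply/eqP => E; rewrite -E Hv in Hni.
  pose j : nat := if v < i then v else v.-1.
  have Hj : 0 < j <= k.
    rewrite /j; case: (ltnP v i) => Hvi'; move: Hvi Hvi' Hvk Hv0 Hik; lia.
  have Hgj : g (nth 0 S j) = v.
    rewrite HG ?(andP Hj).2 // /j; case: (ltnP v i) => Hvi'.
      by rewrite leqNgt Hvi' addn0.
    have Hlt : i < v by rewrite ltn_neqAle eq_sym Hvi Hvi'.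
    have -> : (i <= v.-1) by move: Hlt; lia.
    move: Hv0; lia.
  apply/mapP; exists (nth 0 S j) => //.
  by rewrite mem_filter mem_undup S_in // Hgj Hv.
move=> v; apply/idP/idP; last exact: Hmem.
by case/mapP => z; rewrite mem_filter => /andP[Hz _] ->.
Qed.

Theorem mainTheorem13 (mu : seq nat) :
  is_strict mu -> 2 <= mu1 mu ->
  forall a : seq nat,
    in_D mu a <->
    [/\ is_partition a, ndistinct a = (mu1 mu).-1 &
        forall i : nat, 1 <= i <= (mu1 mu).-1 -> i \notin mu -> rect_x a i = 1].
Proof.
move=> Hs H2 a; split.
- case=> Hp Hw Hav Hnd; split => // i Hi Hni.
  apply/eqP; apply/negPn/negP => Hne; apply: Hav.
  by apply: (dir1 Hs H2 Hp _ Hi Hni Hne); rewrite -nd_eq.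
- case=> Hp Hnd Hc; split => //; last exact: dir2.
  rewrite nd_eq // in Hnd.
  case: a Hp Hnd {Hc} => [|x a] Hp Hnd.
    by move: Hnd H2 => /=; case: (mu1 mu) => [|[]].
  by rewrite /weight /= (leq_trans (part_pos Hp (mem_head _ _)) (leq_addr _ _)).
Qed.
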